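(* Let $\Lambda=(W_j,\Lambda_j,v_j)_{j\in\mathbb{J}}$ be a g-fusion frame for $H$ with g-fusion frame operator $S_\Lambda$, let $\mathbb{I}\subseteq\mathbb{J}$, $\mathbb{I}^c=\mathbb{J}\setminus\mathbb{I}$, and for $\mathbb{K}\subseteq\mathbb{J}$ set $S_{\mathbb{K}}f:=\sum_{j\in\mathbb{K}}v_j^2\pi_{W_j}\Lambda_j^*\Lambda_j\pi_{W_j}f$. Then $$\frac12 S_\Lambda\le S_{\mathbb{I}}S_\Lambda^{-1}S_{\mathbb{I}}+S_{\mathbb{I}^c}S_\Lambda^{-1}S_{\mathbb{I}^c}\le\frac32 S_\Lambda$$ in the order of self-adjoint operators.
   Context: $H$ is a separable Hilbert space, $\mathbb{J}\subseteq\mathbb{Z}$, $\{H_j\}_{j\in\mathbb{J}}$ are separable Hilbert spaces, $\Lambda_j\in\mathcal{B}(H,H_j)$, $W_j$ are closed subspaces of $H$, $v_j>0$, and $\pi_V$ denotes the orthogonal projection onto a closed subspace $V$. The triple $\Lambda=(W_j,\Lambda_j,v_j)$ is a g-fusion frame for $H$ if there exist $0<A\le B<\infty$ with $A\Vert f\Vert^2\le\sum_{j\in\mathbb{J}}v_j^2\Vert\Lambda_j\pi_{W_j}f\Vert^2\le B\Vert f\Vert^2$ for all $f\in H$. Its g-fusion frame operator is $S_\Lambda f=\sum_{j\in\mathbb{J}}v_j^2\pi_{W_j}\Lambda_j^*\Lambda_j\pi_{W_j}f$ (bounded, positive, invertible). $T\le U$ means $\langle Tf,f\rangle\le\langle Uf,f\rangle$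 for all $f$. *)

(* Defs.v *)
From mathcomp Require Import all_boot all_order all_algebra.
From mathcomp Require Import reals complex.
Set Implicit Arguments. Unset Strict Implicit. Unset Printing Implicit Defensive.
Import Order.TTheory GRing.Theory Num.Theory.
Local Open Scope ring_scope.

Section Hilbert.
Variable R : realType.
Local Notation C := R[i].

Definition converges_to {V : zmodType} (nrm : V -> C) (u : nat -> V) (l : V) :=
  forall eps : C, 0 < eps -> exists N : nat, forall n, (N <= n)%N -> nrm (u n - l) < eps.

Definition cauchy_seq {V : zmodType} (nrm : V -> C) (u : nat -> V) :=
  forall eps : C, 0 < eps -> exists N : nat, forall n m, (N <= n)%N -> (N <= m)%N ->
     nrm (u n - u m) < eps.

Record hilbert (V : lmodType C) := Hilbert {
  ip : V -> V -> C;
  ip_linl : forall (a : C) (x y z : V), ip (a *: x + y) z = a * ip x z + ip y z;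
  ip_conj : forall x y : V, ip y x = (ip x y)^*;
  ip_ge0 : forall x : V, 0 <= ip x x;
  ip_eq0 : forall x : V, ip x x = 0 -> x = 0;
  ip_complete : forall u : nat -> V,
      cauchy_seq (fun x => sqrtC (ip x x)) u ->
      exists l, converges_to (fun x => sqrtC (ip x x)) u l
}.

Definition hnorm (V : lmodType C) (hV : hilbert V) (x : V) : C := sqrtC (ip hV x x).

Definition separable (V : lmodType C) (hV : hilbert V) :=
  exists d : nat -> V, forall (x : V) (eps : C), 0 < eps ->
    exists n, hnorm hV (x - d n) < eps.

Definition bounded_op (V W : lmodType C) (hV : hilbert V) (hW : hilbert W)
  (T : V -> W) :=
  (forall (a : C) (x y : V), T (a *: x + y) = a *: T x + T y) /\
  exists M : C, forall x, hnorm hW (T x) <= M * hnorm hV x.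

Definition is_adjoint (V W : lmodType C) (hV : hilbert V) (hW : hilbert W)
  (T : V -> W) (Ts : W -> V) :=
  forall (x : V) (y : W), ip hW (T x) y = ip hV x (Ts y).

Definition closed_subspace (V : lmodType C) (hV : hilbert V) (U : V -> Prop) :=
  U 0 /\ (forall (a : C) x y, U x -> U y -> U (a *: x + y)) /\
  (forall (u : nat -> V) l, (forall n, U (u n)) -> converges_to (hnorm hV) u l -> U l).

Definition is_orth_proj (V : lmodType C) (hV : hilbert V) (U : V -> Prop) (P : V -> V) :=
  forall f, U (P f) /\ forall w, U w -> ip hV (f - P f) w = 0.

(* Unconditional convergence of a family indexed by K ⊆ Z (net of finite subsets). *)
Definition has_sum {V : zmodType} (nrm : V -> C) (K : int -> Prop) (x : int -> V) (s : V) :=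
  forall eps : C, 0 < eps -> exists F0 : seq int, (forall j, j \in F0 -> K j) /\
    forall F : seq int, uniq F -> (forall j, j \in F -> K j) -> {subset F0 <= F} ->
      nrm (\sum_(j <- F) x j - s) < eps.

Definition op_le (V : lmodType C) (hV : hilbert V) (T U : V -> V) :=
  forall f, ip hV (T f) f <= ip hV (U f) f.

Definition gfusion_frame (H : lmodType C) (hH : hilbert H)
  (Hj : int -> lmodType C) (hHj : forall j, hilbert (Hj j)) (J : int -> Prop)
  (W : int -> H -> Prop) (P : int -> H -> H)
  (Lam : forall j, H -> Hj j) (v : int -> C) :=
  (forall j, J j -> closed_subspace hH (W j) /\ is_orth_proj hH (W j) (P j)) /\
  (forall j, J j -> bounded_op hH (hHj j) (Lam j)) /\
  (forall j, J j -> 0 < v j) /\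
  exists A B : C, 0 < A /\ A <= B /\
    forall f, exists s, has_sum (fun z : C => `|z|) J
       (fun j => v j ^+ 2 * hnorm (hHj j) (Lam j (P j f)) ^+ 2) s /\
       A * hnorm hH f ^+ 2 <= s /\ s <= B * hnorm hH f ^+ 2.

Definition is_partial_op (H : lmodType C) (hH : hilbert H)
  (Hj : int -> lmodType C) (K : int -> Prop) (P : int -> H -> H)
  (Lam : forall j, H -> Hj j) (Lams : forall j, Hj j -> H) (v : int -> C)
  (SK : H -> H) :=
  forall f, has_sum (hnorm hH) K
    (fun j => v j ^+ 2 *: P j (Lams j (Lam j (P j f)))) (SK f).

End Hilbert.

(* Main.v *)
Set Warnings "-notation-overridden,-ambiguous-paths".
Require Import Defs.
From mathcomp Require Import all_boot all_order all_algebra.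
From mathcomp Require Import reals complex.
From mathcomp Require Import ring.
From Stdlib Require Import Classical ClassicalEpsilon.
Import Order.TTheory GRing.Theory Num.Theory.
Local Open Scope ring_scope.
Set Implicit Arguments. Unset Strict Implicit.

Lemma ipDl (R : realType) (V : lmodType R[i]) (h : hilbert V) x y z :
  ip h (x + y) z = ip h x z + ip h y z.
Proof. by have := ip_linl h 1 x y z; rewrite scale1r mul1r. Qed.

Lemma ip0l (R : realType) (V : lmodType R[i]) (h : hilbert V) z : ip h 0 z = 0.
Proof. by apply: (addIr (ip h 0 z)); rewrite add0r -ipDl addr0. Qed.

Lemma ipZl (R : realType) (V : lmodType R[i]) (h : hilbert V) a x z :
  ip h (a *: x) z = a * ip h x z.
Proof. by have := ip_linl h a x 0 z; rewrite addr0 ip0l addr0. Qed.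

Lemma ipNl (R : realType) (V : lmodType R[i]) (h : hilbert V) x z :
  ip h (- x) z = - ip h x z.
Proof. by rewrite -scaleN1r ipZl mulN1r. Qed.

Lemma ipBl (R : realType) (V : lmodType R[i]) (h : hilbert V) x y z :
  ip h (x - y) z = ip h x z - ip h y z.
Proof. by rewrite ipDl ipNl. Qed.

Lemma ip_suml (R : realType) (V : lmodType R[i]) (h : hilbert V) (F : seq int) (x : int -> V) z :
  ip h (\sum_(j <- F) x j) z = \sum_(j <- F) ip h (x j) z.
Proof.
by elim: F => [|a F IH]; rewrite ?big_nil ?big_cons ?ip0l // ipDl IH.
Qed.

Lemma ipDr (R : realType) (V : lmodType R[i]) (h : hilbert V) x y z :
  ip h z (x + y) = ip h z x + ip h z y.
Proof. by rewrite (ip_conj h x z) (ip_conj h y z) ip_conj ipDl rmorphD. Qed.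

Lemma ipZr (R : realType) (V : lmodType R[i]) (h : hilbert V) a x z :
  ip h z (a *: x) = a^* * ip h z x.
Proof. by rewrite (ip_conj h x z) ip_conj ipZl rmorphM. Qed.

Lemma ip0r (R : realType) (V : lmodType R[i]) (h : hilbert V) z : ip h z 0 = 0.
Proof. by rewrite ip_conj ip0l rmorph0. Qed.

Lemma ipNr (R : realType) (V : lmodType R[i]) (h : hilbert V) x z :
  ip h z (- x) = - ip h z x.
Proof. by rewrite (ip_conj h x z) ip_conj ipNl rmorphN. Qed.

Lemma ipBr (R : realType) (V : lmodType R[i]) (h : hilbert V) x y z :
  ip h z (x - y) = ip h z x - ip h z y.
Proof. by rewrite ipDr ipNr. Qed.

Lemma conj_ge0 {R : realType} {c : R[i]} : 0 <= c -> c^* = c.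
Proof. by move=> c0; apply: conj_Creal; rewrite ger0_real. Qed.

Lemma ip_inj (R : realType) (V : lmodType R[i]) (h : hilbert V) x y :
  (forall z, ip h x z = ip h y z) -> x = y.
Proof.
move=> E; apply/subr0_eq; apply: (@ip_eq0 _ _ h (x - y)).
by rewrite ipBl E subrr.
Qed.

Lemma ip_CS (R : realType) (V : lmodType R[i]) (h : hilbert V) x y :
  `|ip h x y| ^+ 2 <= ip h x x * ip h y y.
Proof.
have [a0|an0] := eqVneq (ip h y y) 0.
  by rewrite (ip_eq0 a0) !ip0r normr0 expr0n mulr0.
have apos : 0 < ip h y y by rewrite lt_def an0 ip_ge0.
have := ip_ge0 h (ip h y y *: x - ip h x y *: y).
rewrite !ipBl !ipZl !ipBr !ipZr (conj_ge0 (ip_ge0 h y) : _ = _) [ip h y x]ip_conj.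
have -> : ip h y y * (ip h y y * ip h x x - (ip h x y)^* * ip h x y) -
   ip h x y * (ip h y y * (ip h x y)^* - (ip h x y)^* * ip h y y)
   = ip h y y * (ip h x x * ip h y y - ip h x y * (ip h x y)^*) by ring.
by rewrite pmulr_rge0 // subr_ge0 normCK.
Qed.

Lemma hnorm_ge0 (R : realType) (V : lmodType R[i]) (h : hilbert V) x : 0 <= hnorm h x.
Proof. by rewrite /hnorm sqrtC_ge0 ip_ge0. Qed.

Lemma ip_CSn (R : realType) (V : lmodType R[i]) (h : hilbert V) x y :
  `|ip h x y| <= hnorm h x * hnorm h y.
Proof.
rewrite -(@ler_pXn2r _ 2) // ?nnegrE ?mulr_ge0 ?hnorm_ge0 //.
by rewrite exprMn /hnorm !sqrtCK ip_CS.
Qed.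
Lemma small0 (R : realType) (d : R[i]) : (forall e, 0 < e -> `|d| < e + e) -> d = 0.
Proof.
move=> H; apply/eqP/negPn/negP => nz.
have e0 : 0 < `|d| / 2 by rewrite divr_gt0 ?normr_gt0.
by have := H _ e0; rewrite -splitr ltxx.
Qed.

Lemma merge_seq {K : int -> Prop} {F0 F1 : seq int} :
  (forall j, j \in F0 -> K j) -> (forall j, j \in F1 -> K j) ->
  exists F, [/\ uniq F, (forall j, j \in F -> K j), {subset F0 <= F} & {subset F1 <= F}].
Proof.
move=> h0 h1; exists (undup (F0 ++ F1)); split.
- exact: undup_uniq.
- by move=> j; rewrite mem_undup mem_cat => /orP[/h0|/h1].
- by move=> j jF; rewrite mem_undup mem_cat jF.
- by move=> j jF; rewrite mem_undup mem_cat jF orbT.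
Qed.

Notation hsC K x s := (has_sum (fun z => `|z|) K x s).

Lemma hs_unique (R : realType) (K : int -> Prop) (x : int -> R[i]) (s t : R[i]) :
  hsC K x s -> hsC K x t -> s = t.
Proof.
move=> hs ht; apply/eqP; rewrite -subr_eq0; apply/eqP; apply: small0 => e e0.
have [F0 [F0K hF0]] := hs e e0; have [F1 [F1K hF1]] := ht e e0.
have [F [uF FK s0 s1]] := merge_seq F0K F1K.
have := hF0 F uF FK s0; have := hF1 F uF FK s1.
set σ := \sum_(j <- F) x j => h1 h0.
have -> : s - t = (σ - t) - (σ - s) by ring.
by apply: le_lt_trans (ler_normB _ _) _; rewrite addrC ltrD.
Qed.

Lemma hs_add (R : realType) (K : int -> Prop) (x y : int -> R[i]) (s t : R[i]) :
  hsC K x s -> hsC K y t -> hsC K (fun j => x j + y j) (s + t).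
Proof.
move=> hs ht e e0.
have e2 : 0 < e / 2 by rewrite divr_gt0.
have [F0 [F0K hF0]] := hs _ e2; have [F1 [F1K hF1]] := ht _ e2.
have [G [_ GK s0 s1]] := merge_seq F0K F1K.
exists G; split => // F uF FK sG.
have := hF0 F uF FK (fun j jF => sG _ (s0 _ jF)).
have := hF1 F uF FK (fun j jF => sG _ (s1 _ jF)) => h1 h0.
rewrite big_split /=.
rewrite [X in `|X|](_ : _ = (\sum_(j <- F) x j - s) + (\sum_(j <- F) y j - t)); last by ring.
by apply: le_lt_trans (ler_normD _ _) _; rewrite [e]splitr ltrD.
Qed.

Lemma hs_conj (R : realType) (K : int -> Prop) (x : int -> R[i]) (s : R[i]) :
  hsC K x s -> hsC K (fun j => (x j)^*) s^*.
Proof.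
move=> hs e e0; have [F0 [F0K hF0]] := hs e e0; exists F0; split => // F uF FK sF.
have := hF0 F uF FK sF.
by rewrite -rmorph_sum -rmorphB norm_conjC.
Qed.

Lemma hs_ext (R : realType) (K : int -> Prop) (x y : int -> R[i]) (s : R[i]) :
  (forall j, K j -> x j = y j) -> hsC K x s -> hsC K y s.
Proof.
move=> exy hs e e0; have [F0 [F0K hF0]] := hs e e0; exists F0; split => // F uF FK sF.
have := hF0 F uF FK sF.
by rewrite (eq_big_seq y) // => j /FK /exy.
Qed.

Lemma hs_ge0 (R : realType) (K : int -> Prop) (x : int -> R[i]) (s : R[i]) :
  (forall j, K j -> 0 <= x j) -> hsC K x s -> 0 <= s.
Proof.
move=> x0 hs.
suff : `|s| - s = 0 by move/subr0_eq => <-.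
apply: small0 => e e0.
have [F0 [F0K hF0]] := hs e e0.
have [F [uF FK s0 _]] := merge_seq F0K F0K.
have := hF0 F uF FK s0; set σ := \sum_(j <- F) x j => h.
have σ0 : 0 <= σ by rewrite /σ big_seq; apply: sumr_ge0 => j /FK /x0.
have -> : `|s| - s = (`|s| - `|σ|) + (σ - s) by rewrite (ger0_norm σ0); ring.
apply: le_lt_trans (ler_normD _ _) _; apply: ltrD => //.
by apply: le_lt_trans (ler_dist_dist _ _) _; rewrite distrC.
Qed.

Lemma ex_pb (P : Prop) : exists b : bool, b = true <-> P.
Proof.
case: (classic P) => p; first by exists true.
by exists false; split => // /p.
Qed.

Definition pb (P : Prop) : bool :=
  proj1_sig (constructive_indefinite_description _ (ex_pb P)).

Lemma pbP (P : Prop) : pb P = true <-> P.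
Proof. exact: proj2_sig (constructive_indefinite_description _ (ex_pb P)). Qed.

Lemma hs_union (R : realType) (I J : int -> Prop) (x : int -> R[i]) (a b : R[i]) :
  (forall j, I j -> J j) ->
  hsC I x a -> hsC (fun j => J j /\ ~ I j) x b -> hsC J x (a + b).
Proof.
move=> IJ ha hb e e0.
have e2 : 0 < e / 2 by rewrite divr_gt0.
have [F0 [F0K hF0]] := ha _ e2; have [F1 [F1K hF1]] := hb _ e2.
have [G [_ GK s0 s1]] := @merge_seq J F0 F1 (fun j jF => IJ _ (F0K j jF))
   (fun j jF => proj1 (F1K j jF)).
exists G; split => // F uF FK sG.
pose p j := pb (I j).
rewrite (bigID p) /=.
have h0 := hF0 [seq j <- F | p j] (filter_uniq _ uF).
have h1 := hF1 [seq j <- F | ~~ p j] (filter_uniq _ uF).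
have {h0} h0 : `|\sum_(j <- [seq j <- F | p j]) x j - a| < e / 2.
  apply: h0.
    by move=> j; rewrite mem_filter => /andP[/pbP].
  by move=> j jF0; rewrite mem_filter; apply/andP; split; [apply/pbP; exact: F0K|exact/sG/s0].
have {h1} h1 : `|\sum_(j <- [seq j <- F | ~~ p j] ) x j - b| < e / 2.
  apply: h1.
    move=> j; rewrite mem_filter => /andP[pj /FK jJ]; split => // /pbP.
    by rewrite /p in pj; move=> e1; rewrite e1 in pj.
  move=> j jF1; rewrite mem_filter; apply/andP; split; last exact/sG/s1.
  by apply/negP => /pbP; case: (F1K j jF1).
rewrite big_filter in h0; rewrite big_filter in h1.
rewrite [X in `|X|](_ : _ = (\sum_(j <- F | p j) x j - a) +
   (\sum_(j <- F | ~~ p j) x j - b)); last by ring.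
by apply: le_lt_trans (ler_normD _ _) _; rewrite [e]splitr ltrD.
Qed.

Lemma ip_cont (R : realType) (V : lmodType R[i]) (h : hilbert V) (K : int -> Prop)
  (y : int -> V) (s z : V) :
  has_sum (hnorm h) K y s -> hsC K (fun j => ip h (y j) z) (ip h s z).
Proof.
move=> hs e e0.
have N0 : 0 < hnorm h z + 1 by rewrite ltr_wpDl ?hnorm_ge0.
have e1 : 0 < e / (hnorm h z + 1) by rewrite divr_gt0.
have [F0 [F0K hF0]] := hs _ e1; exists F0; split => // F uF FK sF.
have := hF0 F uF FK sF => hlt.
rewrite -ip_suml -ipBl.
apply: le_lt_trans (ip_CSn h _ _) _.
apply: (@le_lt_trans _ _ (e / (hnorm h z + 1) * hnorm h z)).
  by apply: ler_wpM2r; [exact: hnorm_ge0| exact: ltW].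
rewrite -mulrA gtr_pMr // mulrC ltr_pdivrMr // mul1r.
by rewrite ltrDl ltr01.
Qed.

Definition goodj (R : realType) (H : lmodType R[i]) (hH : hilbert H)
  (Hj : int -> lmodType R[i]) (hHj : forall j, hilbert (Hj j))
  (W : int -> H -> Prop) (P : int -> H -> H)
  (Lam : forall j, H -> Hj j) (Lams : forall j, Hj j -> H) (v : int -> R[i]) (j : int) :=
  is_orth_proj hH (W j) (P j) /\ is_adjoint hH (hHj j) (Lam j) (Lams j) /\ 0 < v j.

Lemma proj_sa (R : realType) (V : lmodType R[i]) (h : hilbert V) U Q :
  is_orth_proj h U Q -> forall x y, ip h (Q x) y = ip h x (Q y).
Proof.
move=> hQ x y.
have [Ux hx] := hQ x; have [Uy hy] := hQ y.
have /eqP := hy _ Ux; rewrite ipBl subr_eq0 => /eqP e1.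
have /eqP := hx _ Uy; rewrite ipBl subr_eq0 => /eqP e2.
by rewrite e2 (ip_conj h y (Q x)) e1 (ip_conj h (Q y) (Q x)).
Qed.

Lemma term_form (R : realType) (H : lmodType R[i]) (hH : hilbert H)
  (Hj : int -> lmodType R[i]) (hHj : forall j, hilbert (Hj j))
  (W : int -> H -> Prop) (P : int -> H -> H)
  (Lam : forall j, H -> Hj j) (Lams : forall j, Hj j -> H) (v : int -> R[i]) j f g :
  goodj hH hHj W P Lam Lams v j ->
  ip hH (v j ^+ 2 *: P j (Lams j (Lam j (P j f)))) g
  = v j ^+ 2 * ip (hHj j) (Lam j (P j f)) (Lam j (P j g)).
Proof.
move=> [hP [hA v0]].
rewrite ipZl (proj_sa hP) (ip_conj hH (P j g)) -hA.
by rewrite (ip_conj (hHj j) (Lam j (P j g)) (Lam j (P j f))).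
Qed.

Lemma term_alt (R : realType) (H : lmodType R[i]) (hH : hilbert H)
  (Hj : int -> lmodType R[i]) (hHj : forall j, hilbert (Hj j))
  (W : int -> H -> Prop) (P : int -> H -> H)
  (Lam : forall j, H -> Hj j) (Lams : forall j, Hj j -> H) (v : int -> R[i]) j f g :
  goodj hH hHj W P Lam Lams v j ->
  ip hH (v j ^+ 2 *: P j (Lams j (Lam j (P j f)))) g
  = v j ^+ 2 * ip hH f (P j (Lams j (Lam j (P j g)))).
Proof.
move=> gj; rewrite (term_form _ _ gj); case: gj => [hP [hA v0]].
by rewrite hA (proj_sa hP).
Qed.

Lemma term_add (R : realType) (H : lmodType R[i]) (hH : hilbert H)
  (Hj : int -> lmodType R[i]) (hHj : forall j, hilbert (Hj j))
  (W : int -> H -> Prop) (P : int -> H -> H)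
  (Lam : forall j, H -> Hj j) (Lams : forall j, Hj j -> H) (v : int -> R[i]) j f1 f2 g :
  goodj hH hHj W P Lam Lams v j ->
  ip hH (v j ^+ 2 *: P j (Lams j (Lam j (P j (f1 + f2))))) g
  = ip hH (v j ^+ 2 *: P j (Lams j (Lam j (P j f1)))) g
    + ip hH (v j ^+ 2 *: P j (Lams j (Lam j (P j f2)))) g.
Proof. by move=> gj; rewrite !(term_alt _ _ gj) ipDl mulrDr. Qed.

Lemma term_conj (R : realType) (H : lmodType R[i]) (hH : hilbert H)
  (Hj : int -> lmodType R[i]) (hHj : forall j, hilbert (Hj j))
  (W : int -> H -> Prop) (P : int -> H -> H)
  (Lam : forall j, H -> Hj j) (Lams : forall j, Hj j -> H) (v : int -> R[i]) j f g :
  goodj hH hHj W P Lam Lams v j ->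
  (ip hH (v j ^+ 2 *: P j (Lams j (Lam j (P j g)))) f)^*
  = ip hH (v j ^+ 2 *: P j (Lams j (Lam j (P j f)))) g.
Proof.
move=> gj; rewrite !(term_form _ _ gj); case: gj => [hP [hA v0]].
rewrite rmorphM /= (conj_ge0 (exprn_ge0 2 (ltW v0))).
by rewrite (ip_conj (hHj j) (Lam j (P j g)) (Lam j (P j f))).
Qed.

Lemma term_ge0 (R : realType) (H : lmodType R[i]) (hH : hilbert H)
  (Hj : int -> lmodType R[i]) (hHj : forall j, hilbert (Hj j))
  (W : int -> H -> Prop) (P : int -> H -> H)
  (Lam : forall j, H -> Hj j) (Lams : forall j, Hj j -> H) (v : int -> R[i]) j f :
  goodj hH hHj W P Lam Lams v j ->
  0 <= ip hH (v j ^+ 2 *: P j (Lams j (Lam j (P j f)))) f.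
Proof.
move=> gj; rewrite (term_form _ _ gj); case: gj => [hP [hA v0]].
by rewrite mulr_ge0 ?ip_ge0 // exprn_ge0 // ltW.
Qed.

Lemma SK_conj (R : realType) (H : lmodType R[i]) (hH : hilbert H)
  (Hj : int -> lmodType R[i]) (hHj : forall j, hilbert (Hj j))
  (W : int -> H -> Prop) (P : int -> H -> H)
  (Lam : forall j, H -> Hj j) (Lams : forall j, Hj j -> H) (v : int -> R[i])
  (K : int -> Prop) (SK : H -> H) :
  (forall j, K j -> goodj hH hHj W P Lam Lams v j) ->
  is_partial_op hH K P Lam Lams v SK -> forall f g, ip hH (SK f) g = (ip hH (SK g) f)^*.
Proof.
move=> hK hS f g.
apply: (hs_unique (ip_cont g (hS f))).
apply: hs_ext (hs_conj (ip_cont f (hS g))) => j Kj.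
exact: term_conj (hK j Kj).
Qed.

Lemma SK_add (R : realType) (H : lmodType R[i]) (hH : hilbert H)
  (Hj : int -> lmodType R[i]) (hHj : forall j, hilbert (Hj j))
  (W : int -> H -> Prop) (P : int -> H -> H)
  (Lam : forall j, H -> Hj j) (Lams : forall j, Hj j -> H) (v : int -> R[i])
  (K : int -> Prop) (SK : H -> H) :
  (forall j, K j -> goodj hH hHj W P Lam Lams v j) ->
  is_partial_op hH K P Lam Lams v SK -> forall f1 f2, SK (f1 + f2) = SK f1 + SK f2.
Proof.
move=> hK hS f1 f2; apply: (@ip_inj _ _ hH) => z; rewrite ipDl.
apply: (hs_unique (ip_cont z (hS (f1 + f2)))).
apply: hs_ext (hs_add (ip_cont z (hS f1)) (ip_cont z (hS f2))) => j Kj.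
by rewrite (term_add _ _ _ (hK j Kj)).
Qed.

Lemma SK_ge0 (R : realType) (H : lmodType R[i]) (hH : hilbert H)
  (Hj : int -> lmodType R[i]) (hHj : forall j, hilbert (Hj j))
  (W : int -> H -> Prop) (P : int -> H -> H)
  (Lam : forall j, H -> Hj j) (Lams : forall j, Hj j -> H) (v : int -> R[i])
  (K : int -> Prop) (SK : H -> H) :
  (forall j, K j -> goodj hH hHj W P Lam Lams v j) ->
  is_partial_op hH K P Lam Lams v SK -> forall f, 0 <= ip hH (SK f) f.
Proof.
move=> hK hS f; apply: (hs_ge0 _ (ip_cont f (hS f))) => j Kj.
exact: term_ge0 (hK j Kj).
Qed.

Lemma add_sub (V : zmodType) (T : V -> V) :
  (forall x y, T (x + y) = T x + T y) -> forall x y, T (x - y) = T x - T y.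
Proof. by move=> Tadd x y; rewrite -{2}(subrK y x) Tadd addrK. Qed.

Lemma quad_bound (R : realType) (V : lmodType R[i]) (h : hilbert V) (T : V -> V)
  (f u : V) (a : R[i]) :
  (forall x y, T (x + y) = T x + T y) ->
  (forall x y, ip h (T x) y = (ip h (T y) x)^*) ->
  (forall x, 0 <= ip h (T x) x) ->
  0 <= a -> ip h (T f) u = a -> ip h (T u) u <= a -> a <= ip h (T f) f.
Proof.
move=> Tadd Tsym Tpos a0 Tfu Tuu.
have := Tpos (f - u); rewrite (add_sub Tadd) !ipBl !ipBr Tfu.
rewrite (Tsym u f) Tfu (conj_ge0 a0) => H0.
have : a + a <= ip h (T f) f + ip h (T u) u.
  by rewrite -subr_ge0; move: H0; congr (_ <= _); ring.
move=> H1; rewrite -(lerD2r a); apply: le_trans H1 _.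
by rewrite lerD2l.
Qed.

Unset Implicit Arguments. Set Strict Implicit.

Theorem corollary3p5 (R : realType) (H : lmodType R[i]) (hH : hilbert H)
  (Hj : int -> lmodType R[i]) (hHj : forall j, hilbert (Hj j))
  (J : int -> Prop) (W : int -> H -> Prop) (P : int -> H -> H)
  (Lam : forall j, H -> Hj j) (Lams : forall j, Hj j -> H) (v : int -> R[i])
  (I : int -> Prop) (S Sinv SI SIc : H -> H) :
  separable hH -> (forall j, separable (hHj j)) ->
  gfusion_frame hH hHj J W P Lam v ->
  (forall j, J j -> is_adjoint hH (hHj j) (Lam j) (Lams j)) ->
  (forall j, I j -> J j) ->
  is_partial_op hH J P Lam Lams v S ->
  (forall f, S (Sinv f) = f /\ Sinv (S f) = f) ->
  is_partial_op hH I P Lam Lams v SI ->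
  is_partial_op hH (fun j => J j /\ ~ I j) P Lam Lams v SIc ->
  op_le hH (fun f => 2^-1 *: S f) (fun f => SI (Sinv (SI f)) + SIc (Sinv (SIc f))) /\
  op_le hH (fun f => SI (Sinv (SI f)) + SIc (Sinv (SIc f))) (fun f => (3 / 2) *: S f).
Proof.
move=> _ _ [hW [_ [vpos _]]] hadj IJ hS hinv hSI hSIc.
have hJ : forall j, J j -> goodj hH hHj W P Lam Lams v j.
  by move=> j Jj; split; [exact: (proj2 (hW j Jj))| split; [exact: hadj| exact: vpos]].
have hI : forall j, I j -> goodj hH hHj W P Lam Lams v j by move=> j /IJ /hJ.
have hIc : forall j, J j /\ ~ I j -> goodj hH hHj W P Lam Lams v j by move=> j [/hJ].
have Sadd := SK_add hJ hS; have SIadd := SK_add hI hSI; have SIcadd := SK_add hIc hSIc.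
have Ssym := SK_conj hJ hS; have SIsym := SK_conj hI hSI; have SIcsym := SK_conj hIc hSIc.
have Spos := SK_ge0 hJ hS; have SIpos := SK_ge0 hI hSI; have SIcpos := SK_ge0 hIc hSIc.
have Sinv_add : forall a b, Sinv (a + b) = Sinv a + Sinv b.
  move=> a b; rewrite -{1}(proj1 (hinv a)) -{1}(proj1 (hinv b)) -Sadd.
  exact: (proj2 (hinv _)).
have Sform : forall x y, ip hH (S x) y = ip hH (SI x) y + ip hH (SIc x) y.
  move=> x y; apply: (hs_unique (ip_cont y (hS x))).
  exact: hs_union IJ (ip_cont y (hSI x)) (ip_cont y (hSIc x)).
have Ssplit : forall x, S x = SI x + SIc x.
  by move=> x; apply: (@ip_inj _ _ hH) => z; rewrite ipDl Sform.
move=> {hW vpos hadj}.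
have key : forall f, ip hH (SI (Sinv (SI f)) + SIc (Sinv (SIc f))) f =
    ip hH (S (Sinv (SI f))) (Sinv (SI f)) + ip hH (S (Sinv (SIc f))) (Sinv (SIc f)).
  move=> f; rewrite ipDl SIsym SIcsym.
  rewrite -{1}(proj1 (hinv (SI f))) -{1}(proj1 (hinv (SIc f))).
  by rewrite !(conj_ge0 (Spos _)).
split => f; rewrite key.
- set u := Sinv (SI f); set w := Sinv (SIc f).
  have uw : u + w = f by rewrite /u /w -Sinv_add -Ssplit (proj2 (hinv f)).
  have E : ip hH (S f) f + ip hH (S (u - w)) (u - w)
      = 2 * (ip hH (S u) u + ip hH (S w) w).
    rewrite -uw Sadd (add_sub Sadd) !ipBl !ipDl !ipBr !ipDr; ring.
  rewrite ipZl ler_pdivrMl ?ltr0n // -E lerDl.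
  exact: Spos.
- set u := Sinv (SI f); set w := Sinv (SIc f).
  have Su : S u = SI f by rewrite /u (proj1 (hinv _)).
  have Sw : S w = SIc f by rewrite /w (proj1 (hinv _)).
  have hu : ip hH (S u) u <= ip hH (SI f) f.
    apply: (quad_bound SIadd SIsym SIpos (Spos u)); first by rewrite Su.
    by rewrite Sform lerDl.
  have hw : ip hH (S w) w <= ip hH (SIc f) f.
    apply: (quad_bound SIcadd SIcsym SIcpos (Spos w)); first by rewrite Sw.
    by rewrite Sform lerDr.
  apply: le_trans (lerD hu hw) _.
  rewrite -Sform ipZl ler_peMl ?Spos //.
  by rewrite ler_pdivlMr ?ltr0n // mul1r ler_nat.
Qed.
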